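(* Let $m,n\ge 3$ and let $v$ be any vertex of $\mathcal{C}^3_{m,n}$. Then, with $\mathcal{C}^3_{m,n}-v$ denoting the strong deletion of $v$, \[ \mathcal{E_S}(\mathcal{C}^3_{m,n})>\mathcal{E_S}(\mathcal{C}^3_{m,n}-v). \]
   Context: For a hypergraph $\mathcal{H}$ and distinct vertices $i,j$, the co-degree $c_{ij}$ is the number of hyperedges containing both $i$ and $j$. The Seidel matrix $\mathcal{S}(\mathcal{H})$ has zero diagonal and $(i,j)$-entry $1-2c_{ij}$ for $i\neq j$; the Seidel energy $\mathcal{E_S}(\mathcal{H})$ is the sum of the absolute values of its eigenvalues. The complete $3$-uniform bipartite hypergraph $\mathcal{C}^3_{m,n}$ has vertex set $V_1\sqcup V_2$, $|V_1|=m$, $|V_2|=n$, and hyperedge set all $3$-subsets meeting both $V_1$ and $V_2$. The strong deletion $\mathcal{H}-v$ of a vertex $v$ is the hypergraph with vertex set $V(\mathcal{H})\setminus\{v\}$ and hyperedge set $\{e\in E(\mathcal{H}): v\notin e\}$. *)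

(* Defs.v *)
From HB Require Import structures.
From mathcomp Require Import all_boot all_order all_algebra all_field.
Set Implicit Arguments. Unset Strict Implicit. Unset Printing Implicit Defensive.
Import Order.TTheory GRing.Theory Num.Theory.
Local Open Scope ring_scope.

Record hypergraph (T : finType) := Hypergraph {
  hverts : {set T};
  hedges : {set {set T}} }.

Definition codeg (T : finType) (H : hypergraph T) (i j : T) : nat :=
  #|[set e in hedges H | (i \in e) && (j \in e)]|.

Definition seidel (T : finType) (H : hypergraph T) :
  'M[algC]_(#|hverts H|) :=
  \matrix_(i, j) (if i == j then 0
                  else 1 - 2 * (codeg H (enum_val i) (enum_val j))%:R).

(* The eigenvalues (with multiplicity) of a square complex matrix:
   the roots of its characteristic polynomial. *)
Definition eigenvalues (k : nat) (A : 'M[algC]_k) : seq algC :=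
  sval (closed_field_poly_normal (char_poly A)).

Definition seidel_energy (T : finType) (H : hypergraph T) : algC :=
  \sum_(z <- eigenvalues (seidel H)) `|z|.

Definition strong_delete (T : finType) (H : hypergraph T) (v : T) :
  hypergraph T :=
  Hypergraph (hverts H :\ v) [set e in hedges H | v \notin e].

(* complete 3-uniform bipartite hypergraph C^3_{m,n} on 'I_(m+n):
   V1 = {i | i < m}, V2 = {i | m <= i}. *)
Definition complete_bip3 (m n : nat) : hypergraph 'I_(m + n) :=
  Hypergraph [set: 'I_(m + n)]
    [set e : {set 'I_(m + n)} | [&& #|e| == 3%N,
        [exists x in e, (x < m)%N] & [exists x in e, (m <= x)%N]]].

(* Main.v *)
Require Import Defs.
From HB Require Import structures.
From mathcomp Require Import all_boot all_order all_algebra all_field.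
From mathcomp Require Import ring zify.
Set Implicit Arguments. Unset Strict Implicit. Unset Printing Implicit Defensive.
Import Order.TTheory GRing.Theory Num.Theory.
Local Open Scope ring_scope.

Lemma sylv (R : comNzRingType) n q (A : 'M[R]_(n,q)) (B : 'M[R]_(q,n)) :
  \det (1%:M + A *m B) = \det (1%:M + B *m A).
Proof.
have e1 : block_mx 1%:M (-A) B 1%:M =
   block_mx 1%:M 0 B 1%:M *m block_mx 1%:M (-A) 0 (1%:M + B *m A).
  rewrite mulmx_block ?mul1mx ?mul0mx ?mulmx0 ?mulmx1 ?addr0 ?add0r mulmxN.
  by rewrite addrCA addNr addr0.
have e2 : block_mx 1%:M (-A) B 1%:M =
   block_mx (1%:M + A *m B) (-A) 0 1%:M *m block_mx 1%:M 0 B 1%:M.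
  rewrite mulmx_block ?mul1mx ?mul0mx ?mulmx0 ?mulmx1 ?addr0 ?add0r.
  by rewrite mulNmx addrK.
have := congr1 determinant e1; rewrite e2 !det_mulmx.
rewrite !det_lblock !det_ublock !det1 ?mul1r ?mulr1 => ->; by [].
Qed.

Lemma det22 (R : comNzRingType) (M : 'M[R]_2) :
  \det M = M 0 0 * M 1 1 - M 0 1 * M 1 0.
Proof.
rewrite (expand_det_row _ 0) !big_ord_recl big_ord0 addr0 /cofactor !det_mx11.
rewrite !mxE /= expr0 expr1 !mul1r mulN1r mulrN.
have l1 : lift (0:'I_2) (@ord0 0) = 1 :> 'I_2 by apply: val_inj.
have l2 : True by [].
have l3 : lift ord0 (@ord0 0) = 1 :> 'I_2 by apply: val_inj.
have l4 : lift (1:'I_2) (@ord0 0) = 0 :> 'I_2 by apply: val_inj.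
by rewrite ?l1 ?l3 l4.
Qed.
Lemma horner_char n (A : 'M[algC]_n) x : (char_poly A).[x] = \det (x%:M - A).
Proof.
rewrite /char_poly -[_.[x]]/(horner_eval x _) -det_map_mx; congr (\det _).
apply/matrixP => i j; by rewrite !mxE /= rmorphB rmorphMn /= /horner_eval hornerX hornerC.
Qed.

Lemma sum_if (R : nmodType) N (p : pred 'I_N) (u v : R) :
  \sum_(j < N) (if p j then u else v) = u *+ #|p| + v *+ #|predC p|.
Proof.
rewrite (bigID p) /=; congr (_ + _).
  by rewrite (eq_bigr (fun=> u)) ?sumr_const // => i ->.
by rewrite (eq_bigr (fun=> v)) ?sumr_const // => i /negbTE ->.
Qed.

Lemma prod_if (R : comNzRingType) N (p : pred 'I_N) (u v : R) :
  \prod_(j < N) (if p j then u else v) = u ^+ #|p| * v ^+ #|predC p|.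
Proof.
rewrite (bigID p) /=; congr (_ * _).
  by rewrite (eq_bigr (fun=> u)) ?prodr_const // => i ->.
by rewrite (eq_bigr (fun=> v)) ?prodr_const // => i /negbTE ->.
Qed.

Definition Amat N (p : pred 'I_N) (a b c : algC) : 'M[algC]_N :=
  \matrix_(i, j) (if i == j then 0 else if p i && p j then a
                  else if ~~ p i && ~~ p j then b else c).

Lemma det_Amat N (p : pred 'I_N) a b c x : x + a != 0 -> x + b != 0 ->
  (0 < #|p|)%N -> (0 < #|predC p|)%N ->
  \det (x%:M - Amat p a b c) = (x + a) ^+ (#|p|.-1) * (x + b) ^+ (#|predC p|.-1) *
    ((x - a * (#|p|.-1)%:R) * (x - b * (#|predC p|.-1)%:R)
     - c ^+ 2 * #|p|%:R * #|predC p|%:R).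
Proof.
move=> xa xb kp lp.
pose d : 'rV[algC]_N := \row_i (if p i then x + a else x + b).
have dnz i : d 0 i != 0 by rewrite mxE; case: (p i).
pose U : 'M[algC]_(N,2) := \matrix_(i, w) (- (d 0 i)^-1 *
   (if w == 0 then (p i)%:R else (~~ p i)%:R)).
pose V : 'M[algC]_(2,N) := \matrix_(w, j) (if w == 0 then (if p j then a else c)
   else (if p j then c else b)).
have e : x%:M - Amat p a b c = diag_mx d *m (1%:M + U *m V).
  apply/matrixP => i j; rewrite mul_diag_mx !mxE big_ord_recl big_ord1 !mxE /=.
  have := dnz i; rewrite mxE.
  case: (eqVneq i j) => [<-|nij]; case pi: (p i); case pj: (p j) => /= h; field => //.
rewrite e det_mulmx det_diag sylv det22.
rewrite (eq_bigr (fun i => if p i then x + a else x + b)); last by move=> i _; rewrite mxE.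
rewrite prod_if.
have s1 w w' : (V *m U) w w' = \sum_j (V w j * U j w') by rewrite !mxE.
rewrite !mxE /=.
have S00 : \sum_j V 0 j * U j 0 = (-(a/(x+a))) * #|p|%:R.
  rewrite mulr_natr;
  rewrite (eq_bigr (fun j => if p j then -(a/(x+a)) else 0)) ?sum_if ?mul0rn ?addr0 //.
  by move=> j _; rewrite !mxE /=; case: (p j); rewrite /= ?mulr1 ?mulr0 ?mulrN.
have S11 : \sum_j V 1 j * U j 1 = (-(b/(x+b))) * #|predC p|%:R.
  rewrite mulr_natr;
  rewrite (eq_bigr (fun j => if p j then 0 else -(b/(x+b)))) ?sum_if ?mul0rn ?add0r //.
  by move=> j _; rewrite !mxE /=; case: (p j); rewrite /= ?mulr1 ?mulr0 ?mulrN.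
have S01 : \sum_j V 0 j * U j 1 = (-(c/(x+b))) * #|predC p|%:R.
  rewrite mulr_natr;
  rewrite (eq_bigr (fun j => if p j then 0 else -(c/(x+b)))) ?sum_if ?mul0rn ?add0r //.
  by move=> j _; rewrite !mxE /=; case: (p j); rewrite /= ?mulr1 ?mulr0 ?mulrN.
have S10 : \sum_j V 1 j * U j 0 = (-(c/(x+a))) * #|p|%:R.
  rewrite mulr_natr;
  rewrite (eq_bigr (fun j => if p j then -(c/(x+a)) else 0)) ?sum_if ?mul0rn ?addr0 //.
  by move=> j _; rewrite !mxE /=; case: (p j); rewrite /= ?mulr1 ?mulr0 ?mulrN.
rewrite S00 S11 S01 S10.
move: kp lp; case: #|p| => [//|k'] _; case: #|predC p| => [//|l'] _ /=.
rewrite !exprS -!natr1 expr0.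
set P := (x + a) ^+ k'. set Q := (x + b) ^+ l'.
by field; rewrite xa xb.
Qed.

Lemma char_Amat N (p : pred 'I_N) a b c l1 l2 : a < 0 -> b < 0 ->
  (0 < #|p|)%N -> (0 < #|predC p|)%N ->
  l1 + l2 = a * (#|p|.-1)%:R + b * (#|predC p|.-1)%:R ->
  l1 * l2 = a * b * (#|p|.-1)%:R * (#|predC p|.-1)%:R
            - c ^+ 2 * #|p|%:R * #|predC p|%:R ->
  char_poly (Amat p a b c) =
  \prod_(z <- nseq #|p|.-1 (-a) ++ nseq #|predC p|.-1 (-b) ++ [:: l1; l2])
     ('X - z%:P).
Proof.
move=> a0 b0 kp lp hs hp.
apply/eqP; rewrite -subr_eq0; apply/eqP.
apply: (@roots_geq_poly_eq0 _ _ [seq - (j%:R) | j <- iota 0 N.+1]).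
- apply/allP => _ /mapP [j _ ->]; rewrite /root hornerD hornerN horner_char.
  have xa : - j%:R + a != 0 by apply: ltr0_neq0; rewrite -[0](addr0 0); apply: ler_ltD; rewrite ?oppr_le0.
  have xb : - j%:R + b != 0 by apply: ltr0_neq0; rewrite -[0](addr0 0); apply: ler_ltD; rewrite ?oppr_le0.
  rewrite det_Amat // horner_prod !big_cat /= !big_nseq !iter_mulr !mulr1.
  rewrite !big_cons big_nil mulr1 !hornerXsubC !opprK.
  apply/eqP; set y := 1 *- j.
  have hq : (y - l1) * (y - l2) = ((y - a * (#|p|.-1)%:R) * (y - b * (#|predC p|.-1)%:R) -
   c ^+ 2 * #|p|%:R * #|predC p|%:R).
    have -> : (y - l1) * (y - l2) = y ^+ 2 - (l1 + l2) * y + l1 * l2 by ring.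
    rewrite hs hp; ring.
  rewrite hq; ring.
- rewrite map_inj_uniq ?iota_uniq // => i j /oppr_inj /eqP.
  by rewrite eqr_nat => /eqP.
- rewrite size_map size_iota (leq_trans (size_polyD _ _)) // size_opp.
  rewrite size_char_poly size_prod_XsubC !size_cat !size_nseq /= geq_max leqnn /=.
  have hN : (#|p| + #|predC p| = N)%N by rewrite cardC card_ord.
  by move: hN kp lp; lia.
Qed.

Definition ai (K L : nat) : int := 1 - 2 * (L:int).
Definition bi (K L : nat) : int := 1 - 2 * (K:int).
Definition ci (K L : nat) : int := 5 - 2 * (K:int) - 2 * (L:int).
Definition Ti (K L : nat) : int := ai K L * ((K.-1)%N : int) + bi K L * ((L.-1)%N : int).
Definition Di (K L : nat) : int := ai K L * bi K L * ((K.-1)%N : int) * ((L.-1)%N : int) - ci K L ^+ 2 * K * L.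
Definition Dl (K L : nat) : int := Ti K L ^+ 2 - 4 * Di K L.
Definition Lin (K L : nat) : int := ((K.-1)%N : int) * (2 * (L:int) - 1) + ((L.-1)%N : int) * (2 * (K:int) - 1).

Lemma Di_le0 K L : (1 <= K)%N -> (1 <= L)%N -> Di K L <= 0.
Proof.
move=> hK hL; rewrite /Di /ai /bi /ci.
case: K hK => // K _; case: L hL => // L _ /=.
rewrite !intS; set k : int := K; set l : int := L.
have k0 : 0 <= k by [].
have l0 : 0 <= l by [].
rewrite subr_le0.
have -> : (1 - 2 * (1 + l)) * (1 - 2 * (1 + k)) * k * l = ((2 * k + 1) * (2 * l + 1)) * (k * l) by ring.
have -> : (5 - 2 * (1 + k) - 2 * (1 + l)) ^+ 2 * (1 + k) * (1 + l) =
  (2 * k + 2 * l - 1) ^+ 2 * ((1 + k) * (1 + l)) by ring.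
have [->|kp] := eqVneq k 0; first by rewrite [0 * l]mul0r mulr0; apply: mulr_ge0; rewrite ?sqr_ge0 //; lia.
have [->|lp] := eqVneq l 0; first by rewrite [k * 0]mulr0 mulr0; apply: mulr_ge0; rewrite ?sqr_ge0 //; lia.
have k1 : 1 <= k by lia.
have l1 : 1 <= l by lia.
have h1 : (2 * k + 1) * (2 * l + 1) <= (2 * k + 2 * l - 1) ^+ 2 by nia.
have h2 : k * l <= (1 + k) * (1 + l) by nia.
apply: ler_pM; nia.
Qed.
Lemma Lin_mono1 m n : (3 <= m)%N -> (3 <= n)%N -> Lin m.-1 n < Lin m n.
Proof.
move=> hm hn; rewrite /Lin.
case: m hm => // m hm; case: n hn => // n hn /=.
case: m hm => // m _ /=.
nia.
Qed.
Lemma Lin_mono2 m n : (3 <= m)%N -> (3 <= n)%N -> Lin m n.-1 < Lin m n.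
Proof.
move=> hm hn; rewrite /Lin.
case: m hm => // m hm; case: n hn => // n hn /=.
case: n hn => // n _ /=.
nia.
Qed.
Lemma Dl_form K L : (1 <= K)%N -> (1 <= L)%N ->
  Dl K L = ((K:int) - (L:int)) ^+ 2 + 4 * (K:int) * (L:int) * (2 * (K:int) + 2 * (L:int) - 5) ^+ 2.
Proof.
move=> hK hL; rewrite /Dl /Ti /Di /ai /bi /ci.
case: K hK => // K _; case: L hL => // L _ /=.
rewrite !intS; ring.
Qed.
Lemma Dl_mono1 m n : (3 <= m)%N -> (3 <= n)%N -> Dl m.-1 n <= Dl m n.
Proof.
move=> hm hn; rewrite !Dl_form; try lia.
case: m hm => // m hm /=.
rewrite intS.
set M : int := m. set N : int := n.
have hM : 2 <= M by rewrite /M; lia.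
have hN : 3 <= N by rewrite /N; lia.
rewrite -subr_ge0.
set s := 2 * M + 2 * N - 5.
have -> : (1 + M - N) ^+ 2 + 4 * (1 + M) * N * (2 * (1 + M) + 2 * N - 5) ^+ 2 -
  ((M - N) ^+ 2 + 4 * M * N * (2 * M + 2 * N - 5) ^+ 2) =
  2 * (M - N) + 1 + 4 * N * (s * s + (M + 1) * (4 * s + 4)) by rewrite /s; ring.
have hs : 5 <= s by rewrite /s; lia.
have h1 : N <= s * s by nia.
have h2 : 0 <= (M + 1) * (4 * s + 4) by nia.
nia.
Qed.
Lemma Dl_mono2 m n : (3 <= m)%N -> (3 <= n)%N -> Dl m n.-1 <= Dl m n.
Proof.
move=> hm hn.
have e1 : Dl m n.-1 = Dl n.-1 m by rewrite !Dl_form; try lia; ring.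
have e2 : Dl m n = Dl n m by rewrite !Dl_form; try lia; ring.
by rewrite e1 e2 Dl_mono1.
Qed.

Lemma energy_eig N (A : 'M[algC]_N) t : char_poly A = \prod_(z <- t) ('X - z%:P) ->
  \sum_(z <- eigenvalues A) `|z| = \sum_(z <- t) `|z|.
Proof.
move=> h; rewrite /eigenvalues; case: closed_field_poly_normal => s /= hs.
apply: perm_big; apply: prod_XsubC_eq.
by rewrite -h {1}hs (monicP (char_poly_monic A)) scale1r.
Qed.

Lemma energy_Amat N (p : pred 'I_N) (K L : nat) : #|p| = K -> #|predC p| = L ->
  (1 <= K)%N -> (1 <= L)%N ->
  \sum_(z <- eigenvalues (Amat p (ai K L)%:~R (bi K L)%:~R (ci K L)%:~R)) `|z|
  = (Lin K L)%:~R + sqrtC (Dl K L)%:~R.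
Proof.
move=> hk hl hK hL.
set r := sqrtC (Dl K L)%:~R. set T : algC := (Ti K L)%:~R.
have hr2 : r ^+ 2 = (Dl K L)%:~R by apply: sqrtCK.
have hD := Di_le0 hK hL.
rewrite (energy_eig (t := nseq #|p|.-1 (- (ai K L)%:~R) ++ nseq #|predC p|.-1 (- (bi K L)%:~R)
   ++ [:: (T + r) / 2; (T - r) / 2])); last first.
  apply: char_Amat.
  - by rewrite ltrz0 /ai; lia.
  - by rewrite ltrz0 /bi; lia.
  - by rewrite hk.
  - by rewrite hl.
  - rewrite hk hl /T /Ti intrD !intrM -!pmulrn; field; done.
  - rewrite hk hl.
    have -> : (T + r) / 2 * ((T - r) / 2) = (T ^+ 2 - r ^+ 2) / 4 by field; done.
    rewrite hr2 /Dl /T intrB intrM /= /Di expr2 intrB !intrM -!pmulrn; field; done.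
have hTabs : (`|Ti K L|)%:~R <= r.
  have h0 : (0:algC) <= (`|Ti K L|)%:~R by rewrite ler0z normr_ge0.
  rewrite -(sqrCK h0) /r ler_sqrtC; last first.
  - by rewrite nnegrE ler0z /Dl; nia.
  - by rewrite nnegrE exprn_ge0.
  rewrite expr2 -intrM ler_int /Dl -normrM ger0_norm ?expr2; nia.
have h1 : 0 <= T + r.
  apply: (@le_trans _ _ (T + (`|Ti K L|)%:~R)); last by rewrite lerD2l.
  by rewrite /T -intrD ler0z; lia.
have h2 : T - r <= 0.
  apply: (@le_trans _ _ (T - (`|Ti K L|)%:~R)); first by rewrite lerD2l lerN2.
  by rewrite /T -intrB lerz0; lia.
rewrite !big_cat /= !big_nseq !iter_addr !addr0 !big_cons big_nil addr0.
have ha : `|ai K L| = - ai K L by rewrite ler0_norm // /ai; lia.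
have hb : `|bi K L| = - bi K L by rewrite ler0_norm // /bi; lia.
rewrite !normrN -!intr_norm ha hb.
rewrite ger0_norm; last by apply: divr_ge0.
rewrite ler0_norm; last by apply: mulr_le0_ge0 => //; rewrite invr_ge0.
rewrite hk hl /Lin !intrD !intrM !intrN !intrB !intrM -!pmulrn.
field; done.
Qed.
Section Comb.
Variables (m n : nat) (H : hypergraph 'I_(m + n)).
Hypothesis hE : forall e, (e \in hedges H) = [&& #|e| == 3%N, e \subset hverts H,
   [exists x in e, (x < m)%N] & [exists x in e, (m <= x)%N]].
Let W := hverts H.

Definition Zset (x y : 'I_(m + n)) := [set z in W | [&& z != x, z != y,
   [|| (x < m)%N, (y < m)%N | (z < m)%N] & [|| (m <= x)%N, (m <= y)%N | (m <= z)%N]]].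

Lemma edges_xy x y : x \in W -> y \in W -> x != y ->
  [set e in hedges H | (x \in e) && (y \in e)] = (fun z => [set x; y; z]) @: Zset x y.
Proof.
move=> xW yW nxy; apply/setP => e; rewrite inE hE.
apply/idP/imsetP.
- case/and3P => /and4P [/eqP c3 eW ex1 ex2] xe ye.
  have c2 : #|e :\ x| = 2%N by move: c3; rewrite (cardsD1 x) xe => -[].
  have ye' : y \in e :\ x by rewrite !inE eq_sym nxy.
  have c1 : #|e :\ x :\ y| = 1%N by move: c2; rewrite (cardsD1 y) ye' => -[].
  have [z ez] : exists z, e :\ x :\ y = [set z] by apply/cards1P; rewrite c1.
  have : z \in e :\ x :\ y by rewrite ez set11.
  rewrite !inE => /and3P [zy zx ze].
  have eE : e = [set x; y; z].
    apply/setP => w; rewrite !inE.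
    case: (eqVneq w x) => [->|wx] //=; case: (eqVneq w y) => [->|wy] //=.
    have : (w \in e :\ x :\ y) = (w \in e) by rewrite !inE wx wy.
    by rewrite ez inE => <-.
  exists z => //.
  rewrite !inE zx zy (subsetP eW) //=.
  move: ex1 ex2; rewrite eE => /existsP [w /andP [+ wm]] /existsP [w' /andP [+ w'm]].
  rewrite !inE.
  case/orP => [/orP [] | ] /eqP <-; rewrite ?wm ?orbT //=;
  case/orP => [/orP [] | ] /eqP <-; by rewrite ?w'm ?orbT.
- case=> z; rewrite !inE => /andP [zW /and4P [zx zy c1 c2]] ->.
  rewrite !inE !eqxx ?orbT /=.
  have -> : #|[set x; y; z]| = 3%N.
    rewrite setUC cardsU1 cards2 !inE negb_or nxy /=.
    by rewrite zx zy.
  rewrite eqxx /=.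
  rewrite andbT; apply/and3P; split.
  + by apply/subsetP => w; rewrite !inE => /orP [/orP [] |] /eqP ->.
  + move: c1 => /or3P [] h; apply/existsP; [exists x | exists y | exists z];
      by rewrite !inE !eqxx ?orbT.
  + move: c2 => /or3P [] h; apply/existsP; [exists x | exists y | exists z];
      by rewrite !inE !eqxx ?orbT.
Qed.

Lemma neq_ord (u v : 'I_(m + n)) : (u < m)%N -> (m <= v)%N -> v != u.
Proof. by move=> hu hv; apply/eqP => e; move: hv; rewrite e leqNgt hu. Qed.

Lemma codeg_Z x y : x \in W -> y \in W -> x != y -> codeg H x y = #|Zset x y|.
Proof.
move=> xW yW nxy; rewrite /codeg edges_xy // card_in_imset // => z1 z2 h1 h2 e.
have : z1 \in [set x; y; z2] by rewrite -e !inE eqxx orbT.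
rewrite !inE in h1; case/andP: h1 => _ /and4P [h1x h1y _ _].
by rewrite !inE (negbTE h1x) (negbTE h1y) /= => /eqP.
Qed.

Lemma Z11 (x y : 'I_(m + n)) : (x < m)%N -> (y < m)%N -> Zset x y = [set z in W | (m <= z)%N].
Proof.
move=> hx hy; apply/setP => z; rewrite !inE hx /= !(leqNgt m x) !(leqNgt m y) hx hy /=.
case: (leqP m z) => hz; last by rewrite !andbF.
by rewrite (neq_ord hx hz) (neq_ord hy hz).
Qed.

Lemma Z22 (x y : 'I_(m + n)) : (m <= x)%N -> (m <= y)%N -> Zset x y = [set z in W | (z < m)%N].
Proof.
move=> hx hy; apply/setP => z; rewrite !inE hx hy /= ?orbT !(ltnNge x) !(ltnNge y) hx hy /=.
case: (ltnP z m) => hz; last by rewrite !andbF.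
by rewrite eq_sym (neq_ord hz hx) eq_sym (neq_ord hz hy).
Qed.

Lemma Z12 (x y : 'I_(m + n)) : ~~ (((x < m) && (y < m)) || ((m <= x) && (m <= y)))%N ->
   Zset x y = W :\ x :\ y.
Proof.
move=> h; apply/setP => z; rewrite !inE.
have [c1 c2] : [|| (x < m)%N, (y < m)%N | (z < m)%N] /\ [|| (m <= x)%N, (m <= y)%N | (m <= z)%N].
  by move: h; rewrite !(leqNgt m); case: (x < m)%N; case: (y < m)%N.
by rewrite c1 c2 !andbT; case: (z \in W); case: (z != x); case: (z != y).
Qed.

Definition Kc := #|[set z in W | (z < m)%N]|.
Definition Lc := #|[set z in W | (m <= z)%N]|.

Lemma cardW : #|W| = (Kc + Lc)%N.
Proof.
rewrite -(cardsID [set z : 'I_(m + n) | (z < m)%N] W) /Kc /Lc.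
have -> : W :&: [set z : 'I_(m + n) | (z < m)%N] = [set z in W | (z < m)%N] by apply/setP => z; rewrite !inE.
have -> : W :\: [set z : 'I_(m + n) | (z < m)%N] = [set z in W | (m <= z)%N].
  by apply/setP => z; rewrite !inE; case: (z \in W); rewrite /= ?andbT ?andbF // ltnNge negbK.
by [].
Qed.

Lemma mixed_case x y : x \in W -> y \in W -> x != y ->
  1 - 2 * (#|W :\ x :\ y|)%:R = (ci Kc Lc)%:~R :> algC.
Proof.
move=> xW yW nxy.
have hW : (#|W :\ x :\ y|).+2 = (Kc + Lc)%N.
  rewrite -cardW (cardsD1 x W) xW (cardsD1 y (W :\ x)) !inE eq_sym nxy yW.
  by [].
rewrite -addn2 in hW.
have := congr1 (fun k : nat => k%:R : algC) hW; rewrite /= !natrD => e.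
have e2 : Kc%:R = (#|W :\ x :\ y|)%:R + 2%:R - Lc%:R :> algC by rewrite e addrK.
rewrite /ci !intrB !intrM -!pmulrn e2; ring.
Qed.

Lemma seidel_Amat : seidel H =
  Amat (fun i : 'I_#|W| => (enum_val i < m)%N) (ai Kc Lc)%:~R (bi Kc Lc)%:~R (ci Kc Lc)%:~R.
Proof.
apply/matrixP => i j; rewrite !mxE; case: eqVneq => // nij.
have xW : enum_val i \in W := enum_valP i.
have yW : enum_val j \in W := enum_valP j.
have nxy : enum_val i != enum_val j by rewrite (inj_eq enum_val_inj).
rewrite codeg_Z //.
case hx: (enum_val i < m)%N; case hy: (enum_val j < m)%N => /=.
- by rewrite Z11 // -/Lc /ai intrB intrM -!pmulrn.
- rewrite Z12; last by rewrite !(leqNgt m) hx hy.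
  exact: mixed_case.
- rewrite Z12; last by rewrite !(leqNgt m) hx hy.
  exact: mixed_case.
- rewrite Z22; try by rewrite leqNgt ?hx ?hy.
  by rewrite -/Kc /bi intrB intrM -!pmulrn.
Qed.

Lemma card_p : #|(fun i : 'I_#|W| => (enum_val i < m)%N)| = Kc.
Proof.
rewrite /Kc.
have -> : [set z in W | (z < m)%N] = enum_val @: [set i : 'I_#|W| | (enum_val i < m)%N].
  apply/setP => z; rewrite inE; apply/andP/imsetP.
  - case=> zW hz; exists (enum_rank_in zW z); rewrite ?inE enum_rankK_in //.
  - by case=> i; rewrite inE => hi ->; rewrite enum_valP.
rewrite card_imset; last exact: enum_val_inj.
by apply: eq_card => i; rewrite inE.
Qed.

Lemma card_pC : #|predC (fun i : 'I_#|W| => (enum_val i < m)%N)| = Lc.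
Proof.
rewrite /Lc.
have -> : [set z in W | (m <= z)%N] = enum_val @: [set i : 'I_#|W| | (m <= enum_val i)%N].
  apply/setP => z; rewrite inE; apply/andP/imsetP.
  - case=> zW hz; exists (enum_rank_in zW z); rewrite ?inE enum_rankK_in //.
  - by case=> i; rewrite inE => hi ->; rewrite enum_valP.
rewrite card_imset; last exact: enum_val_inj.
by apply: eq_card => i; rewrite !inE ltnNge negbK.
Qed.

Lemma energy_H : (1 <= Kc)%N -> (1 <= Lc)%N ->
  seidel_energy H = (Lin Kc Lc)%:~R + sqrtC (Dl Kc Lc)%:~R.
Proof.
move=> h1 h2; rewrite /seidel_energy seidel_Amat.
by apply: energy_Amat => //; rewrite ?card_p ?card_pC.
Qed.
End Comb.

Lemma Dl_ge0 K L : (1 <= K)%N -> (1 <= L)%N -> 0 <= Dl K L.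
Proof.
move=> hK hL; rewrite Dl_form //.
apply: addr_ge0; first exact: sqr_ge0.
apply: mulr_ge0; last exact: sqr_ge0.
by apply: mulr_ge0 => //; apply: mulr_ge0.
Qed.

Lemma card_lt m n : #|[set z in [set: 'I_(m + n)] | (z < m)%N]| = m.
Proof.
have -> : [set z in [set: 'I_(m + n)] | (z < m)%N] = lshift n @: [set: 'I_m].
  apply/setP => z; rewrite !inE; apply/idP/imsetP.
  - by move=> hz; exists (Ordinal hz) => //; apply: val_inj.
  - by case=> i _ ->; rewrite /= ltn_ord.
by rewrite card_imset ?cardsT ?card_ord //; exact: lshift_inj.
Qed.

Lemma card_ge m n : #|[set z in [set: 'I_(m + n)] | (m <= z)%N]| = n.
Proof.
have -> : [set z in [set: 'I_(m + n)] | (m <= z)%N] = @rshift m n @: [set: 'I_n].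
  apply/setP => z; rewrite !inE; apply/idP/imsetP.
  - move=> hz; have hz' : (z - m < n)%N by rewrite ltn_subLR // ltn_ord.
    by exists (Ordinal hz') => //; apply: val_inj; rewrite /= subnKC.
  - by case=> i _ ->; rewrite /= leq_addr.
by rewrite card_imset ?cardsT ?card_ord //; exact: rshift_inj.
Qed.

Unset Implicit Arguments.
Theorem corollary3p6 (m n : nat) (hm : (3 <= m)%N) (hn : (3 <= n)%N)
    (v : 'I_(m + n)) :
  seidel_energy (strong_delete (complete_bip3 m n) v)
    < seidel_energy (complete_bip3 m n).
Proof.
set C := complete_bip3 m n.
have hEC : forall e, (e \in hedges C) = [&& #|e| == 3%N, e \subset hverts C,
   [exists x in e, (x < m)%N] & [exists x in e, (m <= x)%N]].
  by move=> e; rewrite /C /complete_bip3 /= inE subsetT.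
have hED : forall e, (e \in hedges (strong_delete C v)) = [&& #|e| == 3%N,
   e \subset hverts (strong_delete C v),
   [exists x in e, (x < m)%N] & [exists x in e, (m <= x)%N]].
  move=> e; rewrite /= inE hEC /= subsetD1 subsetT /=.
  by case: (#|e| == 3%N); case: (v \in e); case: [exists x in e, (x < m)%N];
     case: [exists x in e, (m <= x)%N].
have KC : Kc C = m by rewrite /Kc /= card_lt.
have LC : Lc C = n by rewrite /Lc /= card_ge.
rewrite (energy_H hEC) ?KC ?LC; try lia.
have KD : Kc (strong_delete C v) = if (v < m)%N then m.-1 else m.
  rewrite /Kc /=.
  have -> : [set z in [set: 'I_(m + n)] :\ v | (z < m)%N] =
      [set z in [set: 'I_(m + n)] | (z < m)%N] :\ v.
    by apply/setP => z; rewrite !inE /= andbT.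
  have := cardsD1 v [set z in [set: 'I_(m + n)] | (z < m)%N].
  have vin : (v \in [set z in [set: 'I_(m + n)] | (z < m)%N]) = (v < m)%N by rewrite !inE.
  rewrite card_lt vin => e; case hv: (v < m)%N; rewrite hv /= in e.
  - by rewrite [in RHS]e add1n.
  - by rewrite [in RHS]e add0n.
have LD : Lc (strong_delete C v) = if (v < m)%N then n else n.-1.
  rewrite /Lc /=.
  have -> : [set z in [set: 'I_(m + n)] :\ v | (m <= z)%N] =
      [set z in [set: 'I_(m + n)] | (m <= z)%N] :\ v.
    by apply/setP => z; rewrite !inE /= andbT.
  have := cardsD1 v [set z in [set: 'I_(m + n)] | (m <= z)%N].
  have vin : (v \in [set z in [set: 'I_(m + n)] | (m <= z)%N]) = ~~ (v < m)%N by rewrite !inE leqNgt.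
  rewrite card_ge vin => e; case hv: (v < m)%N; rewrite hv /= in e.
  - by rewrite [in RHS]e add0n.
  - by rewrite [in RHS]e add1n.
have h1 : (1 <= Kc (strong_delete C v))%N by rewrite KD; case: (v < m)%N; lia.
have h2 : (1 <= Lc (strong_delete C v))%N by rewrite LD; case: (v < m)%N; lia.
rewrite (energy_H hED h1 h2) KD LD.
case: (v < m)%N.
- apply: ltr_leD; first by rewrite ltr_int Lin_mono1.
  rewrite ler_sqrtC ?nnegrE ?ler0z ?ler_int ?Dl_mono1 //; apply: Dl_ge0; lia.
- apply: ltr_leD; first by rewrite ltr_int Lin_mono2.
  rewrite ler_sqrtC ?nnegrE ?ler0z ?ler_int ?Dl_mono2 //; apply: Dl_ge0; lia.
Qed.
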